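(* Let $1\le p,q<\infty$, $\theta>0$, and let $p'$ satisfy $\frac1p+\frac1{p'}=1$. If $g\in l^{q)',\theta}(L^{p'})$, then the multiplication operator $M_gf=gf$ is bounded from $l^{q),\theta}(L^p)$ to $L^1(\mathbb R)$ and $\|M_g\|\le\|g\|_{p',q)',\theta}$.
   Context: Index set $\mathbb Z$, $I_k=[k,k+1)$. The space $l^{q),\theta}(L^p)$ consists of complex-valued measurable $f$ on $\mathbb R$ with $f\chi_{I_k}\in L^p$ for all $k$ and $\|f\|_{p,q),\theta}:=\sup_{\varepsilon>0}\Big(\varepsilon^{\theta}\sum_{k\in\mathbb Z}\big(\int_{I_k}|f|^p\big)^{\frac{q(1+\varepsilon)}{p}}\Big)^{\frac{1}{q(1+\varepsilon)}}<\infty$. The small Lebesgue sequence space $l^{q)',\theta}$ consists of sequences $y=\{y_k\}_{k\in\mathbb Z}$ with $$\|y\|_{l^{q)',\theta}}:=\inf\Big\{\sum_{j\in\mathbb Z}\inf_{\varepsilon>0}\varepsilon^{\frac{-\theta}{q(1+\varepsilon)}}\Big(\sum_{k\in\mathbb Z}y_{k,j}^{(q(1+\varepsilon))'}\Big)^{\frac{1}{(q(1+\varepsilon))'}}\Big\}<\infty,$$ the outer infimum over all decompositions $|y_k|=\sum_{j\in\mathbb Z}y_{k,j}$ with $y_{k,j}\ge0$, and $(q(1+\varepsilon))'$ the conjugate exponent of $q(1+\varepsilon)$. For $1\le r\le\infty$, $l^{q)',\theta}(L^{r})$ consists of measurable $g$ on $\mathbb R$ with $g\chi_{I_k}\in L^{r}$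 for all $k$ and $\|g\|_{r,q)',\theta}:=\big\|\{\|g\chi_{I_k}\|_{L^{r}}\}_{k\in\mathbb Z}\big\|_{l^{q)',\theta}}<\infty$. *)

(* Defs.v *)
From HB Require Import structures.
From mathcomp Require Import all_boot all_order all_algebra.
From mathcomp Require Import all_classical all_reals all_analysis.
From mathcomp Require Import complex.
Set Implicit Arguments. Unset Strict Implicit. Unset Printing Implicit Defensive.
Import Order.TTheory GRing.Theory Num.Theory.
Local Open Scope classical_set_scope.
Local Open Scope ring_scope.

Definition cabs (R : realType) (z : R[i]) : R := Normc.normc z.

Definition cmeasurable (R : realType) (f : R -> R[i]) : Prop :=
  measurable_fun setT (fun x => @complex.Re R (f x)) /\ measurable_fun setT (fun x => @complex.Im R (f x)).

Definition Ik (R : realType) (k : int) : set R := `[k%:~R, (k + 1)%:~R[%classic.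

Definition conjR (R : realType) (s : R) : R := s / (s - 1).

Definition conjE (R : realType) (p : R) : \bar R :=
  if p == 1 then +oo%E else (p / (p - 1))%:E.

Definition locint (R : realType) (p : R) (f : R -> R[i]) (k : int) : \bar R :=
  (\int[@lebesgue_measure R]_(x in @Ik R k) (cabs (f x) `^ p)%:E)%E.

Definition locLnorm (R : realType) (r : \bar R) (g : R -> R[i]) (k : int) : \bar R :=
  Lnorm (@lebesgue_measure R) r (fun x => (cabs (g x) * \1_(@Ik R k) x)%:E).

Definition grand_norm (R : realType) (p q theta : R) (f : R -> R[i]) : \bar R :=
  ereal_sup [set v : \bar R | exists2 eps : R, 0 < eps &
    v = poweR ((eps `^ theta)%:E *
                 \esum_(k in [set: int]) poweR (locint p f k) (q * (1 + eps) / p))%E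
              (q * (1 + eps))^-1].

Definition small_norm (R : realType) (q theta : R) (y : int -> R) : \bar R :=
  ereal_inf [set S : \bar R | exists yy : int -> int -> R,
    [/\ (forall k j, 0 <= yy k j),
        (forall k, (`|y k|)%:E = \esum_(j in [set: int]) (yy k j)%:E) &
        S = \esum_(j in [set: int])
              ereal_inf [set w : \bar R | exists2 eps : R, 0 < eps &
                w = ((eps `^ (- theta / (q * (1 + eps))))%:E *
                     poweR (\esum_(k in [set: int])
                              ((yy k j) `^ (conjR (q * (1 + eps))))%:E)
                           (conjR (q * (1 + eps)))^-1)%E]]].

Definition small_amalgam_norm (R : realType) (r : \bar R) (q theta : R)
    (g : R -> R[i]) : \bar R :=
  small_norm q theta (fun k => fine (locLnorm r g k)).

(* Main.v *)
Require Import Defs.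
From HB Require Import structures.
From mathcomp Require Import all_boot all_order all_algebra.
From mathcomp Require Import all_classical all_reals all_analysis.
From mathcomp Require Import complex ess_sup_inf measurable_realfun.
Import Order.TTheory GRing.Theory Num.Theory.
Local Open Scope classical_set_scope.
Local Open Scope ring_scope.

Definition eint (n : nat) : int := if odd n then Negz n./2 else Posz n./2.
Definition dint (k : int) : nat := match k with Posz m => m.*2 | Negz m => m.*2.+1 end.

Lemma eintK : cancel eint dint.
Proof.
move=> n; rewrite /eint; case: ifP => h /=.
  by rewrite -[RHS](odd_double_half n) h.
by rewrite -[RHS](odd_double_half n) h.
Qed.

Lemma dintK : cancel dint eint.
Proof.
case=> m /=; rewrite /eint.
  by rewrite odd_double doubleK.
by rewrite /= odd_double /= uphalf_double.
Qed.

Section aux.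
Variable R : realType.

Lemma esum_int (a : int -> \bar R) : (forall k, 0 <= a k)%E ->
  (\esum_(k in [set: int]) a k = \sum_(n <oo) a (eint n))%E.
Proof.
move=> a0; rewrite (reindex_esum [set: nat] [set: int] eint) ?nneseries_esumT //.
split => //.
- by move=> x y _ _; exact: (can_inj eintK).
- by move=> k _; exists (dint k) => //; exact: dintK.
Qed.

Lemma cabsE (z : R[i]) : cabs z = Num.sqrt (complex.Re z ^+ 2 + complex.Im z ^+ 2).
Proof. by case: z. Qed.

Lemma cabs_ge0 (z : R[i]) : (0 <= cabs z)%R.
Proof. by rewrite cabsE sqrtr_ge0. Qed.

Lemma cabsM (z w : R[i]) : cabs (z * w) = (cabs z * cabs w)%R.
Proof. exact: Normc.normcM. Qed.

Lemma ReM (z w : R[i]) : complex.Re (z * w) = (complex.Re z * complex.Re w - complex.Im z * complex.Im w)%R.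
Proof. by case: z; case: w. Qed.

Lemma ImM (z w : R[i]) : complex.Im (z * w) = (complex.Re z * complex.Im w + complex.Im z * complex.Re w)%R.
Proof. by case: z; case: w. Qed.

Lemma measurable_cabs (f : R -> R[i]) : cmeasurable f ->
  measurable_fun setT (fun x => cabs (f x)).
Proof.
move=> [mr mi].
rewrite (_ : (fun x => _) = Num.sqrt \o (fun x => complex.Re (f x) ^+ 2 + complex.Im (f x) ^+ 2)%R); last first.
  by apply: funext => x; rewrite cabsE.
apply: measurableT_comp; first by apply: continuous_measurable_fun; exact: sqrt_continuous.
by apply: measurable_funD; apply: measurable_funX.
Qed.

Lemma cmeasurableM (f g : R -> R[i]) : cmeasurable f -> cmeasurable g ->
  cmeasurable (fun x => g x * f x).
Proof.
move=> [fr fi] [gr gi]; split.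
- rewrite (_ : (fun x => _) = (fun x => complex.Re (g x) * complex.Re (f x) - complex.Im (g x) * complex.Im (f x))%R); last first.
    by apply: funext => x; rewrite ReM.
  by apply: measurable_funB; apply: measurable_funM.
- rewrite (_ : (fun x => _) = (fun x => complex.Re (g x) * complex.Im (f x) + complex.Im (g x) * complex.Re (f x))%R); last first.
    by apply: funext => x; rewrite ImM.
  by apply: measurable_funD; apply: measurable_funM.
Qed.

Local Open Scope ereal_scope.
Lemma le_inf_mul (S : set (\bar R)) (x : \bar R) (c : R) : (0 <= c)%R ->
  S !=set0 -> (forall s, S s -> x <= s * c%:E) -> x <= ereal_inf S * c%:E.
Proof.
move=> c0 [s0 Ss0] H.
have [c00|cpos] := eqVneq c 0%R.
  by subst c; rewrite mule0; have := H _ Ss0; rewrite mule0.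
have cp : (0 < c)%R by rewrite lt0r cpos.
rewrite -lee_pdivrMr //; apply: le_ereal_inf_tmp => s Ss.
by rewrite lee_pdivrMr //; exact: H.
Qed.

Lemma LnormE_fin d (T : measurableType d) (mu : {measure set T -> \bar R}) (r : R) f :
  Lnorm mu r%:E f = (\int[mu]_x (`|f x| `^ r)) `^ r^-1.
Proof. by rewrite unlock. Qed.

Lemma LnormE_inf d (T : measurableType d) (mu : {measure set T -> \bar R}) f :
  0 < mu setT -> Lnorm mu +oo f = ess_sup mu (abse \o f).
Proof. by move=> h; rewrite unlock /= h. Qed.

Lemma hoelder_nat (F B : nat -> R) (s t : R) : (forall n, 0 <= F n)%R -> (forall n, 0 <= B n)%R ->
  (0 < s)%R -> (0 < t)%R -> (s^-1 + t^-1 = 1)%R ->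
  \sum_(n <oo) (F n * B n)%:E <=
  (\sum_(n <oo) (F n `^ s)%:E) `^ s^-1 * (\sum_(n <oo) (B n `^ t)%:E) `^ t^-1.
Proof.
move=> F0 B0 s0 t0 st.
have mF : measurable_fun setT F by [].
have mB : measurable_fun setT B by [].
have := hoelder counting mF mB s0 t0 st.
rewrite !Lnorm_counting //= invr1.
have E1 : \sum_(k <oo) (`|F k * B k| `^ 1)%:E = \sum_(k <oo) (F k * B k)%:E.
  by apply: eq_eseriesr => n _; rewrite powRr1 ?normr_ge0 // ger0_norm ?mulr_ge0.
have E2 : \sum_(k <oo) (`|F k| `^ s)%:E = \sum_(k <oo) (F k `^ s)%:E.
  by apply: eq_eseriesr => n _; rewrite ger0_norm.
have E3 : \sum_(k <oo) (`|B k| `^ t)%:E = \sum_(k <oo) (B k `^ t)%:E.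
  by apply: eq_eseriesr => n _; rewrite ger0_norm.
rewrite E1 E2 E3 poweRe1. exact: id. by apply: nneseries_ge0 => n _; rewrite lee_fin mulr_ge0.
Qed.

End aux.

Section part2.
Variable R : realType.
Local Notation mu := (@lebesgue_measure R).

Lemma mIk (k : int) : measurable (@Ik R k).
Proof. exact: measurable_itv. Qed.

Lemma Ik_cover (x : R) : Ik (Num.floor x) x.
Proof.
rewrite /Ik /= in_itv /=; apply/andP; split.
  by rewrite -floor_ge_int.
by rewrite -floor_lt_int ltzD1.
Qed.

Lemma Ik_disj (k l : int) (x : R) : Ik k x -> Ik l x -> k = l.
Proof.
rewrite /Ik /= !in_itv /= => /andP[k1 k2] /andP[l1 l2].
have a : (k < l + 1)%R by rewrite -(ltr_int R); apply: le_lt_trans k1 l2.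
have b : (l < k + 1)%R by rewrite -(ltr_int R); apply: le_lt_trans l1 k2.
by apply/eqP; rewrite eq_le -!ltzD1 a b.
Qed.

Lemma muT_gt0 : (0 < mu setT)%E.
Proof.
apply: (@lt_le_trans _ _ (mu `[0%R, 1%R])).
  by rewrite lebesgue_measure_itv /= lte_fin ltr01 /= sube0 lte01.
by apply: le_measure => //; rewrite inE //; exact: measurable_itv.
Qed.

Lemma integral_split (F : R -> \bar R) : measurable_fun setT F -> (forall x, 0 <= F x)%E ->
  (\int[mu]_x F x = \sum_(n <oo) \int[mu]_(x in Ik (eint n)) F x)%E.
Proof.
move=> mF F0.
have cov : \bigcup_n (@Ik R (eint n)) = setT.
  apply/seteqP; split => // x _; exists (dint (Num.floor x)) => //.
  by rewrite dintK; exact: Ik_cover.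
rewrite -cov ge0_integral_bigcup //.
- by move=> n; exact: mIk.
- by rewrite cov.
- move=> n m _ _ [x [h1 h2]]; apply: (can_inj eintK).
  exact: Ik_disj h1 h2.
Qed.

End part2.

Section part3.
Variable R : realType.
Local Notation mu := (@lebesgue_measure R).

Lemma local_hoelder (p : R) (g f : R -> R[i]) (k : int) : 1 <= p ->
  cmeasurable g -> cmeasurable f -> (locLnorm (conjE p) g k < +oo)%E ->
  (\int[mu]_(x in Ik k) (cabs (g x * f x))%:E <=
    locLnorm (conjE p) g k * poweR (locint p f k) p^-1)%E.
Proof.
move=> p1 mg mf gfin.
have p0 : 0 < p by apply: lt_le_trans p1.
set h := fun x => cabs (g x) * \1_(@Ik R k) x.
set u := fun x => cabs (f x) * \1_(@Ik R k) x.
have mh : measurable_fun setT h.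
  by apply: measurable_funM; [exact: measurable_cabs|apply: measurable_indic; exact: mIk].
have mu_ : measurable_fun setT u.
  by apply: measurable_funM; [exact: measurable_cabs|apply: measurable_indic; exact: mIk].
have h0 x : 0 <= h x by rewrite /h mulr_ge0 ?cabs_ge0 // /indic ler0n.
have u0 x : 0 <= u x by rewrite /u mulr_ge0 ?cabs_ge0 // /indic ler0n.
have Lh : (\int[mu]_(x in Ik k) (cabs (g x * f x))%:E = \int[mu]_x (h x * u x)%:E)%E.
  rewrite integral_mkcond; apply: eq_integral => x _.
  rewrite /patch /h /u /indic cabsM; case: (x \in Ik k) => /=.
    by rewrite !mulr1.
  by rewrite !mulr0.
have Lb : poweR (locint p f k) p^-1 = Lnorm mu p%:E (EFin \o u).
  rewrite LnormE_fin /locint; congr (_ `^ _)%E; rewrite [LHS]integral_mkcond.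
  apply: eq_integral => x _; rewrite /patch /u /indic /=.
  case: (x \in Ik k) => /=.
    by rewrite mulr1 ger0_norm ?cabs_ge0 // poweR_EFin.
  by rewrite mulr0 normr0 powR0 // gt_eqF.
rewrite Lh Lb.
have [p1E|pn1] := eqVneq p 1.
- subst p.
  have AE : locLnorm (conjE 1) g k = ess_sup mu (abse \o (EFin \o h)).
    by rewrite /locLnorm /conjE eqxx LnormE_inf //; exact: muT_gt0.
  have A0 : (0 <= locLnorm (conjE 1) g k)%E by rewrite /locLnorm; exact: Lnorm_ge0.
  set A := locLnorm (conjE 1) g k in AE A0 gfin *.
  have Afin : A = (fine A)%:E by rewrite fineK // ge0_fin_numE.
  rewrite Lnorm1.
  apply: (@le_trans _ _ (\int[mu]_x ((fine A)%:E * (EFin \o u) x))%E).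
    apply: ae_ge0_le_integral => //.
    + by move=> x _; rewrite lee_fin mulr_ge0.
    + by apply/measurable_EFinP; apply: measurable_funM.
    + by move=> x _; rewrite /= -EFinM lee_fin mulr_ge0 // fine_ge0.
    + apply/measurable_EFinP => /=.
      by apply: measurable_funM => //; exact: measurable_cst.
    + have := ess_sup_ge mu (abse \o (EFin \o h)).
      apply: filterS => x /= hx _.
      rewrite -AE Afin lee_fin in hx.
      by rewrite lee_fin ler_wpM2r // -(ger0_norm (h0 x)).
  rewrite ge0_integralZl_EFin //; last exact: fine_ge0.
  + rewrite -Afin; apply: lee_wpmul2l => //.
    rewrite le_eqVlt; apply/orP; left; apply/eqP; apply: eq_integral => x _ /=; by rewrite ger0_norm.
  + by move=> x _; rewrite lee_fin.
  + exact/measurable_EFinP.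
- have pg1 : 1 < p by rewrite lt_neqAle eq_sym pn1.
  have q0 : 0 < p / (p - 1) by rewrite divr_gt0 // subr_gt0.
  have pq : p^-1 + (p / (p - 1))^-1 = 1.
    by rewrite invf_div mulrBl mul1r divff ?gt_eqF // addrC subrK.
  have H := hoelder mu mu_ mh p0 q0 pq.
  rewrite Lnorm1 in H.
  have -> : locLnorm (conjE p) g k = Lnorm mu (p / (p - 1))%:E (EFin \o h).
    by rewrite /locLnorm /conjE (negbTE pn1).
  rewrite muleC; apply: le_trans H; rewrite le_eqVlt; apply/orP; left; apply/eqP; apply: eq_integral => x _ /=.
  rewrite ger0_norm ?mulr_ge0 //; [exact: (congr1 EFin (mulrC (h x) (u x)))|exact: cabs_ge0|exact: cabs_ge0].
Qed.

End part3.

Section part4.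
Variable R : realType.
Local Notation mu := (@lebesgue_measure R).

Lemma grand_bound (p q theta : R) (f : R -> R[i]) (eps Gr : R) :
  0 < p -> 1 <= q -> 0 < eps ->
  (forall k, (locint p f k < +oo)%E) ->
  grand_norm p q theta f = Gr%:E ->
  (poweR (\sum_(n <oo) ((fine (locint p f (eint n)) `^ p^-1) `^ (q * (1 + eps)))%:E)
        (q * (1 + eps))^-1 <= (eps `^ (- theta / (q * (1 + eps))))%:E * Gr%:E)%E.
Proof.
move=> p0 q1 e0 Lfin GE.
set s := q * (1 + eps).
have s0 : 0 < s by apply: mulr_gt0; [exact: lt_le_trans ltr01 q1|exact: addr_gt0].
have L0 k : (0 <= locint p f k)%E.
  by apply: integral_ge0 => x _; rewrite lee_fin powR_ge0.
have LE k : locint p f k = (fine (locint p f k))%:E by rewrite fineK // ge0_fin_numE.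
have TE : (\sum_(n <oo) ((fine (locint p f (eint n)) `^ p^-1) `^ s)%:E =
    \esum_(k in [set: int]) poweR (locint p f k) (s / p))%E.
  rewrite esum_int; last by move=> k; exact: poweR_ge0.
  apply: eq_eseriesr => n _.
  by rewrite [in RHS]LE poweR_EFin -powRrM mulrC.
have vle : (poweR ((eps `^ theta)%:E * \esum_(k in [set: int]) poweR (locint p f k) (s / p)) s^-1
    <= Gr%:E)%E.
  rewrite -GE; apply: ereal_sup_ubound; exists eps => //.
rewrite TE.
set T := \esum_(k in [set: int]) _ in vle *.
have T0 : (0 <= T)%E by apply: esum_ge0 => k _; exact: poweR_ge0.
have et0 : 0 < eps `^ theta by exact: powR_gt0.
have sn0 : s^-1 != 0 by rewrite invr_eq0 gt_eqF.
move: T0 vle; case: T => [t| |] //.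
- move=> t0 vle.
  rewrite -EFinM poweR_EFin lee_fin -EFinM poweR_EFin lee_fin in vle *.
  rewrite powRM ?powR_ge0 // in vle.
  rewrite -powRrM in vle.
  rewrite mulNr powRN ler_pdivlMl //; exact: powR_gt0.
- move=> _; rewrite gt0_muley ?lte_fin // poweRyr //.
Qed.

Definition cset (q theta : R) (yy : int -> int -> R) (j : int) : set (\bar R) :=
  [set w : \bar R | exists2 eps : R, 0 < eps &
                w = ((eps `^ (- theta / (q * (1 + eps))))%:E *
                     poweR (\esum_(k in [set: int])
                              ((yy k j) `^ (conjR (q * (1 + eps))))%:E)
                           (conjR (q * (1 + eps)))^-1)%E].

Lemma cset_ge0 q theta yy j : (0 <= ereal_inf (cset q theta yy j))%E.
Proof.
apply: le_ereal_inf_tmp => w [eps _ ->].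
by rewrite mule_ge0 ?lee_fin ?powR_ge0 ?poweR_ge0.
Qed.

Lemma JB (p q theta : R) (f : R -> R[i]) (yy : int -> int -> R) (Gr : R) :
  0 < p -> 1 <= q -> 0 <= Gr ->
  (forall k, (locint p f k < +oo)%E) ->
  grand_norm p q theta f = Gr%:E ->
  (forall k j, 0 <= yy k j) ->
  forall j, (\sum_(n <oo) (yy (eint n) j * (fine (locint p f (eint n)) `^ p^-1))%:E
     <= ereal_inf (cset q theta yy j) * Gr%:E)%E.
Proof.
move=> p0 q1 Gr0 Lfin GE yy0 j.
apply: le_inf_mul => //.
  by eexists; exists 1 => //; exact: ltr01.
move=> w [eps e0 ->].
set s := q * (1 + eps).
have s1 : 1 < s.
  apply: (@lt_le_trans _ _ (1 + eps)); first by rewrite ltrDl.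
  by rewrite /s ler_peMl // addr_ge0 // ltW.
have s0 : 0 < s by apply: lt_trans s1; exact: ltr01.
have s10 : 0 < s - 1 by rewrite subr_gt0.
have sc0 : 0 < conjR s by rewrite /conjR divr_gt0.
have sc : (conjR s)^-1 + s^-1 = 1.
  by rewrite /conjR invf_div mulrBl mul1r divff ?gt_eqF // subrK.
apply: le_trans.
  apply: (@hoelder_nat R (fun n => yy (eint n) j) (fun n => fine (locint p f (eint n)) `^ p^-1) (conjR s) s) => //.
  by move=> n; exact: powR_ge0.
have -> : (\sum_(n <oo) (yy (eint n) j `^ conjR s)%:E =
    \esum_(k in [set: int]) ((yy k j) `^ (conjR s))%:E)%E.
  by rewrite esum_int // => k; rewrite lee_fin powR_ge0.
rewrite (muleC (_ %:E) (poweR _ _)) -muleA.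
apply: lee_wpmul2l; first exact: poweR_ge0.
exact: grand_bound.
Qed.

End part4.

Theorem theorem4p2 (R : realType) (p q theta : R)
  (hp : 1 <= p) (hq : 1 <= q) (htheta : 0 < theta) (g : R -> R[i])
  (hgm : cmeasurable g)
  (hgloc : forall k : int, (locLnorm (conjE p) g k < +oo)%E)
  (hgn : (small_amalgam_norm (conjE p) q theta g < +oo)%E) :
  forall f : R -> R[i],
    cmeasurable f ->
    (forall k : int, (locint p f k < +oo)%E) ->
    (grand_norm p q theta f < +oo)%E ->
    [/\ cmeasurable (fun x => g x * f x),
        (@lebesgue_measure R).-integrable setT (fun x => (cabs (g x * f x))%:E) &
        (\int[@lebesgue_measure R]_x (cabs (g x * f x))%:E
           <= small_amalgam_norm (conjE p) q theta g * grand_norm p q theta f)%E].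
Proof.
move=> f hfm hfloc hfn.
have p0 : 0 < p by apply: lt_le_trans hp.
have q0 : 0 < q by apply: lt_le_trans hq.
have mgf : cmeasurable (fun x => g x * f x) by exact: cmeasurableM.
have mF : measurable_fun setT (fun x => (cabs (g x * f x))%:E).
  by apply/measurable_EFinP; exact: measurable_cabs.
have G0 : (0 <= grand_norm p q theta f)%E.
  apply: (@le_trans _ _ (poweR ((1 `^ theta)%:E *
      \esum_(k in [set: int]) poweR (locint p f k) (q * (1 + 1) / p)) (q * (1 + 1))^-1)).
    exact: poweR_ge0.
  by apply: ereal_sup_ubound; exists 1.
set G := grand_norm p q theta f in G0 hfn *.
have GE : G = (fine G)%:E by rewrite fineK // ge0_fin_numE.
set Gr := fine G in GE.
have Gr0 : 0 <= Gr by rewrite /Gr fine_ge0.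
set al := fun k => fine (locLnorm (conjE p) g k).
have al0 k : 0 <= al k by rewrite /al fine_ge0 // /locLnorm Lnorm_ge0.
have aE k : locLnorm (conjE p) g k = (al k)%:E.
  by rewrite /al fineK // ge0_fin_numE // /locLnorm Lnorm_ge0.
set be := fun k => fine (locint p f k) `^ p^-1.
have be0 k : 0 <= be k by rewrite /be powR_ge0.
have bE k : poweR (locint p f k) p^-1 = (be k)%:E.
  have L0 : (0 <= locint p f k)%E.
    by apply: integral_ge0 => x _; rewrite lee_fin powR_ge0.
  by rewrite -[in LHS](@fineK _ (locint p f k)) ?ge0_fin_numE // poweR_EFin.
have S1 : (\int[@lebesgue_measure R]_x (cabs (g x * f x))%:E <=
    \sum_(n <oo) (al (eint n) * be (eint n))%:E)%E.
  rewrite integral_split //; last by move=> x; rewrite lee_fin cabs_ge0.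
  apply: lee_nneseries.
    by move=> n _ _; apply: integral_ge0 => x _; rewrite lee_fin cabs_ge0.
  move=> n _; rewrite EFinM -aE -bE; exact: local_hoelder.
have small0 : (0 <= small_amalgam_norm (conjE p) q theta g)%E.
  apply: le_ereal_inf_tmp => S [yy [_ _ ->]].
  by apply: esum_ge0 => j _; exact: cset_ge0.
have MB : (\int[@lebesgue_measure R]_x (cabs (g x * f x))%:E <=
    small_amalgam_norm (conjE p) q theta g * G)%E.
  apply: le_trans S1 _.
  rewrite GE /small_amalgam_norm /small_norm.
  apply: le_inf_mul => //.
    eexists; exists (fun k j => if j == 0 then `|al k| else 0); split.
    - by move=> k j; case: ifP.
    - move=> k; rewrite (esumID [set 0%Z]); last first.
        by move=> j _; rewrite lee_fin; case: ifP.
      rewrite setTI esum_set1 /=; last by rewrite lee_fin normr_ge0.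
      rewrite esum1 ?adde0 //.
      by move=> j [_ /= /eqP /negbTE ->].
    - reflexivity.
  move=> S [yy [yy0 hyy ->]].
  have hyy' k : ((al k)%:E = \sum_(m <oo) (yy k (eint m))%:E)%E.
    rewrite -(ger0_norm (al0 k)) hyy esum_int //.
    by move=> j; rewrite lee_fin.
  have -> : (\sum_(n <oo) (al (eint n) * be (eint n))%:E =
      \sum_(n <oo) \sum_(m <oo) (yy (eint n) (eint m) * be (eint n))%:E)%E.
    apply: eq_eseriesr => n _.
    rewrite mulrC EFinM hyy' -nneseriesZl; last by move=> m _; rewrite lee_fin.
    by apply: eq_eseriesr => m _; rewrite -EFinM mulrC.
  rewrite nneseries_interchange; last by move=> n m; rewrite lee_fin mulr_ge0.
  have K : (\sum_(m <oo) \sum_(n <oo) (yy (eint n) (eint m) * be (eint n))%:E <=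
      \sum_(m <oo) (ereal_inf (cset R q theta yy (eint m)) * Gr%:E))%E.
    apply: lee_nneseries.
      by move=> m _ _; apply: nneseries_ge0 => n _; rewrite lee_fin mulr_ge0.
    move=> m _; exact: JB.
  apply: le_trans K _.
  under eq_eseriesr do rewrite muleC.
  rewrite nneseriesZl; last by move=> m _; exact: cset_ge0.
  by rewrite muleC esum_int //; move=> j; exact: cset_ge0.
split => //.
apply/integrableP; split => //.
under eq_integral => x _ do rewrite gee0_abs ?lee_fin ?cabs_ge0 //.
apply: le_lt_trans MB _.
rewrite muleC GE; apply: lte_mul_pinfty => //.
Qed.
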